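(* Let $\mathcal N_{Y_1\cdots Y_K\mid X}$ and $\widetilde{\mathcal N}_{Y_1\cdots Y_K\mid X}$ be two discrete memoryless $K$-user broadcast channels with the same input alphabet and output alphabets, whose marginals coincide: $\mathcal N_{Y_k\mid X}=\widetilde{\mathcal N}_{Y_k\mid X}$ for all $k\in[K]$, where $\mathcal N_{Y_k\mid X}(y_k\mid x)=\sum_{(y_l)_{l\ne k}}\mathcal N(y_1,\dots,y_K\mid x)$. Then for any NS-assisted (or classical) coding scheme over $n$ channel uses, the error probability of the $k$-th message is the same when the scheme is used over $\mathcal N$ as when it is used over $\widetilde{\mathcal N}$, i.e. $P_{e,k}=\widetilde P_{e,k}$ for every $k\in[K]$.
   Context: A discrete memoryless $K$-user BC has input alphabet $\mathcal X$, output alphabets $\mathcal Y_k$ and transition law $\mathcal N(y_1,\dots,y_K\mid x)$, with $n$ uses given by $\mathcal N^{\otimes n}(y^{[n]}_{[K]}\mid x^{[n]})=\prod_{\tau=1}^n\mathcal N(y_1^{(\tau)},\dots,y_K^{(\tau)}\mid x^{(\tau)})$. Messages $W_1,\dots,W_K$ are independent, $W_k$ uniform on a finite nonempty set $\mathcal M_k$. A classical scheme: stochastic encoder $X^{[n]}=\phi(W_1,\dots,W_K)$ and stochastic decoders $\hat W_k=\psi_k(Y_k^{[n]})$. A $\kappa$-partite NS box is a conditional pmf $\mathcal Z(b_1,\dots,b_\kappa\mid a_1,\dots,a_\kappa)$ (finite output alphabets) such that for every subset of parties, the marginal of their outputs given all inputs depends only on their inputs. An NS-assisted scheme: a $(K+1)$-partite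 NS box where the transmitter inputs $(W_1,\dots,W_K)$ and obtains $U\in\mathcal X^n$, transmitting $X^{[n]}=U$; Rx-$k$ inputs $Y_k^{[n]}$ and obtains $\hat W_k\in\mathcal M_k$; joint law $\Pr(w,x^{[n]},y^{[n]}_{[K]},\hat w)=\frac{1}{\prod_k|\mathcal M_k|}\mathcal Z(x^{[n]},\hat w_{[K]}\mid w_{[K]},y^{[n]}_{[K]})\mathcal N^{\otimes n}(y^{[n]}_{[K]}\mid x^{[n]})$. The error probability of message $k$ is $P_{e,k}=\Pr(\hat W_k\ne W_k)$ ($\widetilde P_{e,k}$ over $\widetilde{\mathcal N}$). *)

(* Defs.v *)
From HB Require Import structures.
From mathcomp Require Import all_boot all_order all_algebra.
Set Implicit Arguments. Unset Strict Implicit. Unset Printing Implicit Defensive.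
Import Order.TTheory GRing.Theory Num.Theory.
Local Open Scope ring_scope.

Section BC.
Variable R : realFieldType.

Definition is_channel (K : nat) (X : finType) (Y : 'I_K -> finType)
    (N : X -> {dffun forall k : 'I_K, Y k} -> R) : Prop :=
  (forall x y, 0 <= N x y) /\ (forall x, \sum_y N x y = 1).

Definition bc_marginal (K : nat) (X : finType) (Y : 'I_K -> finType)
    (N : X -> {dffun forall k : 'I_K, Y k} -> R) (k : 'I_K) (x : X) (yk : Y k) : R :=
  \sum_(y : {dffun forall l : 'I_K, Y l} | y k == yk) N x y.

Definition out_at (K n : nat) (Y : 'I_K -> finType)
    (y : {dffun forall k : 'I_K, {ffun 'I_n -> Y k}}) (tau : 'I_n)
    : {dffun forall k : 'I_K, Y k} :=
  @finfun _ (fun k => Y k) (fun k => y k tau).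

Definition bc_n (K n : nat) (X : finType) (Y : 'I_K -> finType)
    (N : X -> {dffun forall k : 'I_K, Y k} -> R)
    (x : {ffun 'I_n -> X}) (y : {dffun forall k : 'I_K, {ffun 'I_n -> Y k}}) : R :=
  \prod_(tau < n) N (x tau) (out_at y tau).

Definition is_NS_box (P : finType) (A B : P -> finType)
    (Z : {dffun forall p : P, A p} -> {dffun forall p : P, B p} -> R) : Prop :=
  [/\ (forall a b, 0 <= Z a b),
      (forall a, \sum_b Z a b = 1) &
      (forall (S : {set P}) (a a' : {dffun forall p : P, A p})
              (b : {dffun forall p : P, B p}),
         (forall p, p \in S -> a p = a' p) ->
         \sum_(b' : {dffun forall p : P, B p} | [forall p in S, b' p == b p]) Z a b'
         = \sum_(b' : {dffun forall p : P, B p} | [forall p in S, b' p == b p]) Z a' b')].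

(* The (K+1)-partite box of an NS-assisted scheme: party None is the
   transmitter (input (W_1..W_K), output U in X^n), party Some k is Rx-k
   (input Y_k^[n], output hat W_k in M k). *)
Definition ns_in (K n : nat) (M Y : 'I_K -> finType) (p : option 'I_K) : finType :=
  match p with
  | None => {dffun forall k : 'I_K, M k}
  | Some k => {ffun 'I_n -> Y k}
  end.

Definition ns_out (K n : nat) (X : finType) (M : 'I_K -> finType) (p : option 'I_K)
    : finType :=
  match p with
  | None => {ffun 'I_n -> X}
  | Some k => M k
  end.

Definition rx_inputs (K n : nat) (M Y : 'I_K -> finType)
    (a : {dffun forall p : option 'I_K, ns_in n M Y p})
    : {dffun forall k : 'I_K, {ffun 'I_n -> Y k}} :=
  @finfun _ (fun k => {ffun 'I_n -> Y k}) (fun k => a (Some k)).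

Definition num_messages (K : nat) (M : 'I_K -> finType) : R :=
  (\prod_(k < K) #|M k|)%:R.

Definition ns_error (K n : nat) (X : finType) (Y M : 'I_K -> finType)
    (N : X -> {dffun forall k : 'I_K, Y k} -> R)
    (Z : {dffun forall p : option 'I_K, ns_in n M Y p} ->
         {dffun forall p : option 'I_K, ns_out n X M p} -> R)
    (k : 'I_K) : R :=
  (num_messages M)^-1 *
  \sum_(a : {dffun forall p : option 'I_K, ns_in n M Y p})
  \sum_(b : {dffun forall p : option 'I_K, ns_out n X M p})
     (b (Some k) != (a None : {dffun forall l : 'I_K, M l}) k)%:R
     * Z a b * bc_n N (b None) (rx_inputs a).

(* Stochastic encoder phi w x = Pr(X^[n] = x | W = w), stochastic decoders
   psi k y w' = Pr(hat W_k = w' | Y_k^[n] = y). *)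
Definition is_classical_scheme (K n : nat) (X : finType) (Y M : 'I_K -> finType)
    (phi : {dffun forall k : 'I_K, M k} -> {ffun 'I_n -> X} -> R)
    (psi : forall k : 'I_K, {ffun 'I_n -> Y k} -> M k -> R) : Prop :=
  [/\ (forall w x, 0 <= phi w x), (forall w, \sum_x phi w x = 1),
      (forall k y w', 0 <= psi k y w') & (forall k y, \sum_w' psi k y w' = 1)].

Definition classical_error (K n : nat) (X : finType) (Y M : 'I_K -> finType)
    (N : X -> {dffun forall k : 'I_K, Y k} -> R)
    (phi : {dffun forall k : 'I_K, M k} -> {ffun 'I_n -> X} -> R)
    (psi : forall k : 'I_K, {ffun 'I_n -> Y k} -> M k -> R)
    (k : 'I_K) : R :=
  (num_messages M)^-1 *
  \sum_(w : {dffun forall l : 'I_K, M l})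
  \sum_(x : {ffun 'I_n -> X})
  \sum_(y : {dffun forall l : 'I_K, {ffun 'I_n -> Y l}})
  \sum_(w' : M k)
     (w' != w k)%:R * phi w x * bc_n N x y * psi k (y k) w'.

End BC.

Arguments bc_marginal {R K X Y} N k x yk.

(* Main.v *)
Require Import Defs.
From HB Require Import structures.
From mathcomp Require Import all_boot all_order all_algebra ring.
Import Order.TTheory GRing.Theory Num.Theory.
Local Open Scope ring_scope.
Set Implicit Arguments. Unset Strict Implicit.

Section S.
Variables (R : realFieldType) (K n : nat) (X : finType) (Y : 'I_K -> finType).

Definition trY (f : {ffun 'I_n -> {dffun forall k : 'I_K, Y k}})
  : {dffun forall k : 'I_K, {ffun 'I_n -> Y k}} :=
  @finfun _ (fun k => {ffun 'I_n -> Y k}) (fun k => [ffun t => f t k]).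
Definition untrY (y : {dffun forall k : 'I_K, {ffun 'I_n -> Y k}})
  : {ffun 'I_n -> {dffun forall k : 'I_K, Y k}} := [ffun t => out_at y t].

Lemma trYK : cancel trY untrY.
Proof. move=> f; apply/ffunP=> t; apply/ffunP=> k; by rewrite !ffunE. Qed.
Lemma untrYK : cancel untrY trY.
Proof. move=> y; apply/ffunP=> k; apply/ffunP=> t; by rewrite !ffunE. Qed.

Lemma prodP (N : X -> {dffun forall k : 'I_K, Y k} -> R) (x : {ffun 'I_n -> X})
  (k : 'I_K) (yk : {ffun 'I_n -> Y k}) :
  \sum_(y : {dffun forall l : 'I_K, {ffun 'I_n -> Y l}} | y k == yk) bc_n N x y = \prod_t bc_marginal N k (x t) (yk t).
Proof.
rewrite /bc_marginal bigA_distr_big_dep.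
rewrite (reindex trY); last by exists untrY => y _; [apply: trYK| apply: untrYK].
apply: eq_big.
  move=> f; apply/eqP/familyP.
    by move=> E t; rewrite -E /trY !ffunE unfold_in /=.
  move=> H; apply/ffunP=> t; rewrite !ffunE; have := H t; by rewrite unfold_in => /eqP.
move=> f _; apply: eq_bigr => t _; congr (N _ _).
by apply/ffunP=> l; rewrite !ffunE.
Qed.

Lemma keysum (T U : finType) (key : T -> U) (G F1 F2 : T -> R) :
  (forall t t', key t = key t' -> G t = G t') ->
  (forall t, \sum_(t' | key t' == key t) F1 t' = \sum_(t' | key t' == key t) F2 t') ->
  \sum_t G t * F1 t = \sum_t G t * F2 t.
Proof.
move=> HG HF.
rewrite (partition_big key predT) //= [RHS](partition_big key predT) //=.
apply: eq_bigr => u _.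
case: (pickP [pred t | key t == u]) => [t0 /eqP Ht0|H0]; last first.
  by rewrite !big_pred0 // => t; rewrite H0.
rewrite (eq_bigr (fun t => G t0 * F1 t)); last first.
  by move=> t /eqP Ht; rewrite (HG t t0) // Ht Ht0.
rewrite [RHS](eq_bigr (fun t => G t0 * F2 t)); last first.
  by move=> t /eqP Ht; rewrite (HG t t0) // Ht Ht0.
by rewrite -!mulr_sumr -Ht0 HF.
Qed.

Lemma chan_eq (N Nt : X -> {dffun forall k : 'I_K, Y k} -> R) (k : 'I_K)
  (x : {ffun 'I_n -> X}) (h : {dffun forall k : 'I_K, {ffun 'I_n -> Y k}} -> R) :
  (forall (x : X) (yk : Y k), bc_marginal N k x yk = bc_marginal Nt k x yk) ->
  (forall y y' : {dffun forall l : 'I_K, {ffun 'I_n -> Y l}}, y k = y' k -> h y = h y') ->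
  \sum_y bc_n N x y * h y = \sum_y bc_n Nt x y * h y.
Proof.
move=> Hm Hh.
rewrite (eq_bigr (fun y => h y * bc_n N x y)); last by move=> *; rewrite mulrC.
rewrite [RHS](eq_bigr (fun y => h y * bc_n Nt x y)); last by move=> *; rewrite mulrC.
apply: (@keysum _ {ffun 'I_n -> Y k} (fun y : {dffun forall l : 'I_K, {ffun 'I_n -> Y l}} => y k) h (bc_n N x) (bc_n Nt x)) => // y.
rewrite !prodP; apply: eq_bigr => t _; exact: Hm.
Qed.

Variable (M : 'I_K -> finType).

Definition mkA (p : {dffun forall k : 'I_K, M k} * {dffun forall k : 'I_K, {ffun 'I_n -> Y k}})
  : {dffun forall o : option 'I_K, ns_in n M Y o} :=
  @finfun (option 'I_K) (ns_in n M Y)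
    (fun o => match o return ns_in n M Y o with None => p.1 | Some l => p.2 l end).

Definition unA (a : {dffun forall o : option 'I_K, ns_in n M Y o})
  : {dffun forall k : 'I_K, M k} * {dffun forall k : 'I_K, {ffun 'I_n -> Y k}} :=
  (a None, rx_inputs a).

Lemma mkAK : cancel mkA unA.
Proof.
case=> w y; rewrite /unA /mkA ffunE /=; congr pair.
by apply/ffunP=> l; rewrite !ffunE.
Qed.
Lemma unAK : cancel unA mkA.
Proof. by move=> a; apply/ffunP; case=> [l|]; rewrite !ffunE. Qed.

Definition keyb (k : 'I_K) (b : {dffun forall o : option 'I_K, ns_out n X M o})
  : {ffun 'I_n -> X} * M k := (b None, b (Some k)).

Lemma keyb_eq (k : 'I_K) (b b0 : {dffun forall o : option 'I_K, ns_out n X M o}) :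
  (keyb k b == keyb k b0) = [forall p in [set None; Some k], b p == b0 p].
Proof.
apply/idP/idP.
  rewrite /keyb xpair_eqE => /andP[/eqP E1 /eqP E2].
  apply/forall_inP => p; rewrite !inE => /orP[] /eqP -> //; exact/eqP.
move/forall_inP => H; rewrite /keyb xpair_eqE.
by rewrite (H None) ?inE ?eqxx // (H (Some k)) // !inE eqxx orbT.
Qed.

Lemma NSdep (Z : {dffun forall p : option 'I_K, ns_in n M Y p} ->
              {dffun forall p : option 'I_K, ns_out n X M p} -> R) (k : 'I_K) (w : {dffun forall l : 'I_K, M l}) (y y' : {dffun forall l : 'I_K, {ffun 'I_n -> Y l}}) (u : {ffun 'I_n -> X} * M k) :
  is_NS_box Z -> y k = y' k ->
  \sum_(b | keyb k b == u) Z (mkA (w, y)) b = \sum_(b | keyb k b == u) Z (mkA (w, y')) b.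
Proof.
case=> _ _ HNS Hy.
case: (pickP [pred b | keyb k b == u]) => [b0 /eqP Hb0|H0]; last first.
  by rewrite !big_pred0 // => t; rewrite H0.
rewrite -Hb0; under eq_bigl => b do rewrite keyb_eq.
under [RHS]eq_bigl => b do rewrite keyb_eq.
apply: HNS => p; rewrite !inE => /orP[] /eqP -> ; rewrite /mkA !ffunE //=.
Qed.

Definition Pw (Z : {dffun forall p : option 'I_K, ns_in n M Y p} ->
              {dffun forall p : option 'I_K, ns_out n X M p} -> R) (k : 'I_K)
   (w : {dffun forall l : 'I_K, M l}) (y : {dffun forall l : 'I_K, {ffun 'I_n -> Y l}})
   (u : {ffun 'I_n -> X} * M k) : R :=
  \sum_(b | keyb k b == u) Z (mkA (w, y)) b.

Lemma ns_form (N : X -> {dffun forall k : 'I_K, Y k} -> R)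
  (Z : {dffun forall p : option 'I_K, ns_in n M Y p} ->
              {dffun forall p : option 'I_K, ns_out n X M p} -> R) (k : 'I_K) :
  \sum_(a : {dffun forall p : option 'I_K, ns_in n M Y p})
  \sum_(b : {dffun forall p : option 'I_K, ns_out n X M p})
     (b (Some k) != (a None : {dffun forall l : 'I_K, M l}) k)%:R
     * Z a b * bc_n N (b None) (rx_inputs a)
  = \sum_(w : {dffun forall l : 'I_K, M l}) \sum_(u : {ffun 'I_n -> X} * M k)
     (u.2 != w k)%:R * \sum_(y : {dffun forall l : 'I_K, {ffun 'I_n -> Y l}})
        bc_n N u.1 y * Pw Z w y u.
Proof.
rewrite (reindex mkA); last by exists unA => j _; [exact: mkAK| exact: unAK].
transitivity (\sum_(w : {dffun forall l : 'I_K, M l})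
   \sum_(y : {dffun forall l : 'I_K, {ffun 'I_n -> Y l}})
   \sum_(b : {dffun forall p : option 'I_K, ns_out n X M p})
     ((b (Some k) != w k)%:R * Z (mkA (w,y)) b * bc_n N (b None) y)).
  rewrite [RHS]pair_bigA; apply: eq_bigr => -[w y] _ /=; apply: eq_bigr => b _.
  have E := mkAK (w,y); rewrite /unA in E; case: E => E1 E2.
  by rewrite E1 E2.
apply: eq_bigr => w _.
under eq_bigr => y _ do rewrite (partition_big (keyb k) predT) //=.
rewrite exchange_big /=; apply: eq_bigr => u _.
rewrite mulr_sumr; apply: eq_bigr => y _.
rewrite /Pw !mulr_sumr; apply: eq_bigr => b /eqP Hb.
have E1 : b None = u.1 by rewrite -Hb.
have E2 : b (Some k) = u.2 by rewrite -Hb.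
rewrite E1 E2; ring.
Qed.
End S.

Theorem theorem2 (R : realFieldType) (K n : nat) (X : finType)
    (Y M : 'I_K -> finType)
    (N Nt : X -> {dffun forall k : 'I_K, Y k} -> R) :
  (forall k : 'I_K, (0 < #|M k|)%N) ->
  is_channel N -> is_channel Nt ->
  (forall (k : 'I_K) (x : X) (yk : Y k), bc_marginal N k x yk = bc_marginal Nt k x yk) ->
  (forall Z : {dffun forall p : option 'I_K, ns_in n M Y p} ->
              {dffun forall p : option 'I_K, ns_out n X M p} -> R,
     is_NS_box Z -> forall k : 'I_K, ns_error N Z k = ns_error Nt Z k) /\
  (forall (phi : {dffun forall k : 'I_K, M k} -> {ffun 'I_n -> X} -> R)
          (psi : forall k : 'I_K, {ffun 'I_n -> Y k} -> M k -> R),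
     is_classical_scheme phi psi ->
     forall k : 'I_K, classical_error N phi psi k = classical_error Nt phi psi k).
Proof.
move=> _ _ _ Hm; split.
  move=> Z HZ k; rewrite /ns_error !ns_form; congr (_ * _).
  apply: eq_bigr => w _; apply: eq_bigr => u _; congr (_ * _).
  apply: (chan_eq (k:=k)); first exact: Hm.
  by move=> y y' Hy; rewrite /Pw; apply: NSdep HZ Hy.
move=> phi psi _ k; rewrite /classical_error; congr (_ * _).
apply: eq_bigr => w _; apply: eq_bigr => x _.
pose h (y : {dffun forall l : 'I_K, {ffun 'I_n -> Y l}}) :=
  phi w x * \sum_(w' : M k) (w' != w k)%:R * psi k (y k) w'.
transitivity (\sum_(y : {dffun forall l : 'I_K, {ffun 'I_n -> Y l}}) bc_n N x y * h y).
  apply: eq_bigr => y _; rewrite /h !mulr_sumr; apply: eq_bigr => w' _; ring.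
transitivity (\sum_(y : {dffun forall l : 'I_K, {ffun 'I_n -> Y l}}) bc_n Nt x y * h y).
  apply: (chan_eq (k:=k)); first exact: Hm.
  by move=> y y' Hy; rewrite /h Hy.
apply: eq_bigr => y _; rewrite /h !mulr_sumr; apply: eq_bigr => w' _; ring.
Qed.
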